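(* Let $G$ be a connected graph on at least $3$ vertices and let $G'$ be obtained from $G$ by subdividing an edge $e$. Then $rx_3(G')\le rx_3(G)+1$.
   Context: Subdividing an edge $e=uw$ means deleting $e$, adding a new vertex $x$, and adding the edges $xu$ and $xw$. An edge coloring may give adjacent edges the same color; a tree is rainbow if its edges have pairwise distinct colors. For a connected graph on at least $3$ vertices, $rx_3$ is the minimum number of colors in an edge coloring such that every set of $3$ vertices lies in some rainbow tree. *)

(* Defs.v *)
From mathcomp Require Import all_boot.
Set Implicit Arguments. Unset Strict Implicit. Unset Printing Implicit Defensive.

Definition simple_graph (T : finType) (e : rel T) : Prop :=
  symmetric e /\ irreflexive e.

Definition connected_graph (T : finType) (e : rel T) : Prop :=
  forall x y : T, connect e x y.

(* Subdividing the edge uw: the new vertex is None, old vertices are Some a. *)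
Definition subdivide (T : finType) (e : rel T) (u w : T) : rel (option T) :=
  fun x y =>
    match x, y with
    | Some a, Some b => e a b && ~~ (((a == u) && (b == w)) || ((a == w) && (b == u)))
    | Some a, None => (a == u) || (a == w)
    | None, Some b => (b == u) || (b == w)
    | None, None => false
    end.

Definition is_subtree (T : finType) (e : rel T) (V : {set T}) (f : rel T) : Prop :=
  [/\ (forall x y, f x y -> e x y),
      symmetric f,
      (forall x y, f x y -> x \in V),
      (forall x y, x \in V -> y \in V -> connect f x y) &
      (forall s : seq T, cycle f s -> uniq s -> 2 < size s -> False)].

(* Edge coloring c (only values on edges matter, required symmetric there);
   f is rainbow if distinct edges of f get distinct colors. *)
Definition rainbow (T : finType) (c : T -> T -> nat) (f : rel T) : Prop :=
  forall a b a' b', f a b -> f a' b' -> c a b = c a' b' ->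
    (a = a' /\ b = b') \/ (a = b' /\ b = a').

Definition rainbow3_coloring (T : finType) (e : rel T) (k : nat)
    (c : T -> T -> nat) : Prop :=
  [/\ (forall x y, e x y -> c x y < k),
      (forall x y, e x y -> c x y = c y x) &
      (forall S : {set T}, #|S| = 3 ->
         exists (V : {set T}) (f : rel T),
           [/\ is_subtree e V f, S \subset V & rainbow c f])].

Definition is_rx3 (T : finType) (e : rel T) (k : nat) : Prop :=
  (exists c, rainbow3_coloring e k c) /\
  (forall j, (exists c, rainbow3_coloring e j c) -> k <= j).

(* Main.v *)
Require Import Defs.
From mathcomp Require Import all_boot.
From Stdlib Require Import Classical.

Lemma map_pmap_id (X : eqType) (s : seq (option X)) :
  None \notin s -> map Some (pmap id s) = s.
Proof.
elim: s => //= -[x|] s IH; rewrite in_cons => /norP[H1 H2] //=.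
by rewrite IH.
Qed.

Lemma last_in (X : eqType) (a : X) t : t != [::] -> last a t \in t.
Proof. by case/lastP: t => // t x _; rewrite last_rcons mem_rcons mem_head. Qed.

Section Sub.
Variables (T : finType) (e : rel T) (u w : T) (k : nat) (c : T -> T -> nat).
Hypothesis uw_neq : u != w.
Hypothesis euw : e u w.
Hypothesis ck : forall x y, e x y -> c x y < k.

Definition cN a := if a == u then c u w else k.
Definition c' (x y : option T) : nat := match x, y with
  | Some a, Some b => c a b | Some a, None => cN a
  | None, Some b => cN b | None, None => 0 end.

Variables (V : {set T}) (f : rel T) (addx : bool).
Hypothesis tree : is_subtree e V f.
Hypothesis haddx : addx -> w \in V.
Hypothesis rb : rainbow c f.

Definition isuw a b := ((a == u) && (b == w)) || ((a == w) && (b == u)).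
Definition fN a := (f u w && ((a == u) || (a == w))) || (addx && ~~ f u w && (a == w)).
Definition fp : rel (option T) := fun x y => match x, y with
  | Some a, Some b => f a b && ~~ isuw a b
  | Some a, None => fN a | None, Some b => fN b | None, None => false end.
Definition V' : {set option T} :=
  Some @: V :|: (if f u w || addx then [set None] else set0).

Lemma inV'S a : (Some a \in V') = (a \in V).
Proof.
rewrite in_setU mem_imset; last by move=> ? ? [].
by case: (f u w || addx); rewrite ?in_set1 ?in_set0 orbF.
Qed.

Lemma inV'N : (None \in V') = (f u w || addx).
Proof.
rewrite in_setU; case: (f u w || addx); rewrite ?in_set1 ?in_set0 ?orbT ?orbF //.
by apply/imsetP => -[].
Qed.

Lemma fN_uw a : fN a -> (a == u) || (a == w).
Proof. by rewrite /fN => /orP[/andP[_ ->]|/andP[_ /eqP ->]]; rewrite ?eqxx ?orbT. Qed.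

Lemma col_none a a' : fN a -> fN a' -> cN a = cN a' -> a = a'.
Proof.
have cuwk : c u w < k by apply: ck.
move=> /fN_uw Ha /fN_uw Ha'; rewrite /cN.
case: (a =P u) Ha => [->|_] /= Ha; case: (a' =P u) Ha' => [->|_] /= Ha' //.
- by move=> E; rewrite E ltnn in cuwk.
- by move=> E; rewrite -E ltnn in cuwk.
- by rewrite (eqP Ha) (eqP Ha').
Qed.

Lemma subtree' : is_subtree (subdivide e u w) V' fp.
Proof.
case: tree => fe fsym fV fcon facyc.
have fuwV : f u w -> (u \in V) && (w \in V).
  by move=> H; rewrite (fV _ _ H) (fV w u) // fsym.
have fNV a : fN a -> a \in V.
  rewrite /fN => /orP[/andP[]|/andP[]].
    by move=> /fuwV/andP[Hu Hw] /orP[]/eqP->.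
  by move=> /andP[/haddx Hw _] /eqP->.
have fNuwN : forall a, fN a -> f u w || addx.
  by move=> a; rewrite /fN => /orP[/andP[->]|/andP[/andP[->]]]; rewrite ?orbT.
have fpsym : symmetric fp.
  move=> [a|] [b|] //=.
  by rewrite (fsym a b) /isuw orbC (andbC (b == u)) (andbC (b == w)).
have step a b : f a b -> connect fp (Some a) (Some b).
  move=> fab; case H: (isuw a b).
    have fuw : f u w.
      by move: H; rewrite /isuw => /orP[]/andP[/eqP Ea /eqP Eb]; move: fab; rewrite Ea Eb // fsym.
    apply: (connect_trans (y := None)); apply: connect1 => /=; rewrite /fN fuw /=;
    by move: H; rewrite /isuw => /orP[]/andP[/eqP Ea /eqP Eb]; rewrite ?Ea ?Eb eqxx ?orbT.
  by apply: connect1 => /=; rewrite fab H.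
have liftc a b : connect f a b -> connect fp (Some a) (Some b).
  move=> /connectP[p]; elim: p a => [|x p IH] a /=; first by move=> _ ->.
  move=> /andP[fax pp] Eb; apply: connect_trans (step _ _ fax) (IH _ pp Eb).
have Nnb : None \in V' -> exists2 z, z \in V & fN z.
  rewrite inV'N => /orP[fuw|ax].
    by exists u; [case/andP: (fuwV fuw)|rewrite /fN fuw eqxx].
  case fuw: (f u w); first by exists u; [case/andP: (fuwV fuw)|rewrite /fN fuw eqxx].
  by exists w; [apply: haddx|rewrite /fN ax fuw eqxx orbT].
split.
- move=> [a|] [b|] //=; try exact: fN_uw.
  by move=> /andP[/fe -> H].
- by move=> x y; apply: fpsym.
- move=> [a|] [b|] //=; rewrite ?inV'S ?inV'N.
  + by move=> /andP[/fV].
  + exact: fNV.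
  + exact: fNuwN.
- have toN z : fN z -> connect fp (Some z) None /\ connect fp None (Some z).
    by move=> H; split; apply: connect1.
  move=> [a|] [b|]; rewrite ?inV'S //.
  + by move=> Ha Hb; apply: liftc; apply: fcon.
  + move=> Ha /Nnb[z Hz /toN[H1 _]]; apply: connect_trans H1.
    by apply: liftc; apply: fcon.
  + move=> /Nnb[z Hz /toN[_ H1]] Hb; apply: connect_trans H1 _.
    by apply: liftc; apply: fcon.
- move=> s cs us ss.
  case: (boolP (None \in s)) => Hn; last first.
    move: cs us ss; rewrite -(@map_pmap_id _ s Hn) cycle_map (map_inj_uniq (fun x y => @Some_inj _ x y)) size_map.
    move=> cs' us' ss'; apply: (facyc _ _ us' ss').
    by apply: sub_cycle cs' => a b /andP[].
  case: (rot_to Hn) => i t Et.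
  have cs' : cycle fp (None :: t) by rewrite -Et rot_cycle.
  have us' : uniq (None :: t) by rewrite -Et rot_uniq.
  have ss' : 2 < size (None :: t) by rewrite -Et size_rot.
  move: cs' us' ss'; rewrite /= => cs' /andP[Nt ut] ss'.
  move: cs' ut ss'; rewrite -(@map_pmap_id _ t Nt).
  case: (pmap id t) => [|a t1] //=.
  rewrite rcons_path path_map (map_inj_uniq (fun x y => @Some_inj _ x y)) size_map.
  rewrite last_map (mem_map (fun x y => @Some_inj _ x y)) => /and3P[Ha pt1 Hl] /andP[at1 ut1] st1.
  have t1n : t1 != [::] by case: t1 st1 {pt1 Hl at1 ut1}.
  have neq : a != last a t1.
    by apply: contraNneq at1 => ->; apply: last_in.
  have pf : path f a t1 by apply: sub_path pt1 => x y /andP[].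
  case fuw: (f u w).
  + move: Ha Hl; rewrite /fp /fN fuw /= !andbF !orbF => Ha Hl.
    have fla : f (last a t1) a.
      move: Ha Hl neq => /orP[]/eqP-> /orP[]/eqP->; rewrite ?eqxx //.
      by rewrite fsym.
    have st : 2 < size (a :: t1).
      case: t1 t1n pt1 Hl neq {pf fla at1 ut1 st1} => [|b [|b' t2]] //= _.
      rewrite andbT => /andP[_ nuw] Hlb nab; move: nuw nab; rewrite /isuw.
      by case/orP: Ha => /eqP Ea; case/orP: Hlb => /eqP Eb; rewrite Ea Eb ?eqxx ?orbT.
    apply: (facyc (a :: t1)) => //=; last by rewrite at1.
    by rewrite rcons_path pf.
  + move: Ha Hl; rewrite /fp /fN fuw /= !andbT => /andP[_ /eqP Ea] /andP[_ /eqP El].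
    by move: neq; rewrite El Ea eqxx.
Qed.
Lemma rainbow' : rainbow c' fp.
Proof.
case: tree => fe fsym _ _ _.
have cuwk : c u w < k by apply: ck.
have SN a b a' : fp (Some a) (Some b) -> fN a' -> c a b = cN a' -> False.
  move=> /andP[fab nuw] Ha'; rewrite /cN.
  case: (a' =P u) => [Eu|_] E.
  - have fuw : f u w.
      by move: Ha'; rewrite /fN Eu eqxx (negbTE uw_neq) !andbF orbF andbT.
    by case: (rb _ _ _ _ fab fuw E) => -[Ea Eb]; move: nuw; rewrite /isuw Ea Eb !eqxx ?orbT.
  - by move: (ck _ _ (fe _ _ fab)); rewrite E ltnn.
move=> [a|] [b|] [a'|] [b'|] //=; move=> H1 H2 E.
all: try by [case: (rb _ _ _ _ (andP H1).1 (andP H2).1 E) => -[-> ->]; [left|right]].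
all: try by [exfalso; apply: (SN _ _ _ H1 H2 E)].
all: try by [exfalso; apply: (SN _ _ _ H2 H1 (esym E))].
all: try by [left; split=> //; rewrite (col_none _ _ H1 H2 E)].
all: try by [right; split=> //; rewrite (col_none _ _ H1 H2 E)].
Qed.

End Sub.

From mathcomp Require Import zify.

Lemma ext3 (T : finType) (P : {set T}) :
  #|P| <= 3 -> 3 <= #|T| -> exists S0 : {set T}, #|S0| = 3 /\ P \subset S0.
Proof.
move=> hP hT; move eq: (3 - #|P|) => n; elim: n P hP eq => [|n IH] P hP eq.
  by exists P; split => //; lia.
have : ~: P != set0.
  apply/eqP => E; have := cardsC P; rewrite E cards0; lia.
case/set0Pn => z; rewrite in_setC => zP.
have := cardsU1 z P; rewrite zP /= => Ec.
case: (IH (z |: P)); [lia|lia|] => S0 [H1 H2].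
exists S0; split => //; apply: subset_trans H2; exact: subsetUr.
Qed.

Lemma min_ex (P : nat -> Prop) n : P n -> exists m, P m /\ forall j, P j -> m <= j.
Proof.
elim: n {-2}n (leqnn n) => [|N IH] n Hn Pn.
  by exists n; split => // j _; move: Hn; rewrite leqn0 => /eqP ->.
case: (classic (exists j, j < n /\ P j)) => [[j [Hj Pj]]|H].
  by apply: (IH j) => //; lia.
exists n; split => // j Pj; rewrite leqNgt; apply/negP => Hj; apply: H; by exists j.
Qed.

Lemma color' (T : finType) (e : rel T) (u w : T) (k : nat) (c : T -> T -> nat) :
  simple_graph e -> 3 <= #|T| -> e u w -> rainbow3_coloring e k c ->
  rainbow3_coloring (subdivide e u w) k.+1 (c' T u w k c).
Proof.
move=> [esym eirr] hT euw [ck csym cS].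
have uw_neq : u != w by apply: contraTneq euw => ->; rewrite eirr.
have cuwk : c u w < k by apply: ck.
split.
- move=> [a|] [b|] //=; rewrite /cN.
  + by move=> /andP[/ck /ltnW].
  + by case: ifP => _ _ //; apply: ltnW.
  + by case: ifP => _ _ //; apply: ltnW.
- by move=> [a|] [b|] //= /andP[/csym].
move=> S' HS'.
set P := [set a | Some a \in S'].
set addx := None \in S'.
set Q := if addx then [set w] else set0.
have cP : #|S'| = addx + #|P|.
  have E : Some @: P = S' :\ None.
    apply/setP => -[a|]; rewrite !inE.
      by rewrite mem_imset ?inE //; move=> ? ? [].
    by apply/imsetP => -[].
  by rewrite (cardsD1 None S') -E (card_imset P (fun x y => @Some_inj _ x y)).
have cQ : #|Q| = addx by rewrite /Q /addx; case: (None \in S'); rewrite ?cards1 ?cards0.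
have : #|P :|: Q| <= 3 by have := cardsUI P Q; lia.
case/ext3 => // S0 [HS0 sub].
case: (cS S0 HS0) => V [f [tree sS0V rb]].
have haddx : addx -> w \in V.
  move=> ax; apply: (subsetP sS0V); apply: (subsetP sub).
  by rewrite /Q ax !inE eqxx orbT.
exists (V' T u w V f addx), (fp T u w f addx); split.
- exact: subtree'.
- apply/subsetP => -[a|] Ha.
    rewrite inV'S; apply: (subsetP sS0V); apply: (subsetP sub).
    by rewrite !inE Ha.
  by rewrite inV'N /addx Ha orbT.
- exact: (@rainbow' _ _ _ _ _ _ uw_neq euw ck _ _ addx tree rb).
Qed.

Theorem corollary3 (T : finType) (e : rel T) (u w : T) (k : nat) :
  simple_graph e -> connected_graph e -> 3 <= #|T| -> e u w ->
  is_rx3 e k ->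
  exists k', is_rx3 (subdivide e u w) k' /\ k' <= k + 1.
Proof.
move=> sg _ hT euw [[c Hc] _].
have H := @color' _ _ _ _ _ _ sg hT euw Hc.
have [m [[c1 Hm] Hmin]] := @min_ex
  (fun j => exists c, rainbow3_coloring (subdivide e u w) j c) k.+1 (ex_intro _ _ H).
exists m; split; first by split; [exists c1|].
by rewrite addn1; apply: Hmin; exists (c' T u w k c).
Qed.
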